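(* Let $w$ be an nTL-monomial for $P_n$ with decreasing runs $R_1,\dots,R_k$ (in order of appearance) and peaks $p_1,\dots,p_k$. Then $p_1<p_2<\cdots<p_k$.
   Context: Fix $n\ge 0$. The nil-Temperley-Lieb algebra $A_n$ of the path graph $P_n$ is the unital associative algebra generated by $x_1,\dots,x_n$ subject to the relations $x_i^2=0$; $x_ix_j=x_jx_i$ if $|i-j|>1$; $x_ix_{i+1}x_i=0$ and $x_{i+1}x_ix_{i+1}=0$ for $1\le i<n$. A word is a finite product $x_{i_1}\cdots x_{i_m}$ of generators. Two words are equivalent if one can be obtained from the other by repeatedly swapping adjacent letters $x_ix_j\to x_jx_i$ with $|i-j|>1$. A word is reducible if it equals $0$ in $A_n$. Words of the same length are compared lexicographically by index sequences. An nTL-monomial is a word that is not reducible and lexicographically smallest among all words equivalent to it. A decreasing run is a maximal block of consecutive letters with strictly decreasing indices; the index of its first letter is its peak, and the index of its last letter is its valley. *)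

(* Defs.v *)
From mathcomp Require Import all_boot.
From Stdlib Require Import Relation_Operators.
Set Implicit Arguments. Unset Strict Implicit. Unset Printing Implicit Defensive.

(* A word x_{i_1} ... x_{i_m} is represented by its index sequence [:: i_1; ...; i_m]. *)
Definition word := seq nat.

Definition word_on (n : nat) (w : word) : bool := all (fun i => (0 < i <= n)%N) w.

Inductive comm_step : word -> word -> Prop :=
| CommStep u v i j : (i.+1 < j)%N || (j.+1 < i)%N ->
    comm_step (u ++ [:: i; j] ++ v) (u ++ [:: j; i] ++ v).

Definition word_equiv : word -> word -> Prop := clos_refl_sym_trans word comm_step.

(* The defining presentation of A_n, read as a presentation of a monoid with
   zero: elements are words or Zero (None).  One-step rewriting by a defining
   relation applied inside a context. *)
Inductive rel_step : option word -> option word -> Prop :=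
| RComm u v i j : (i.+1 < j)%N || (j.+1 < i)%N ->
    rel_step (Some (u ++ [:: i; j] ++ v)) (Some (u ++ [:: j; i] ++ v))
| RSquare u v i : rel_step (Some (u ++ [:: i; i] ++ v)) None
| RBraid1 u v i : rel_step (Some (u ++ [:: i; i.+1; i] ++ v)) None
| RBraid2 u v i : rel_step (Some (u ++ [:: i.+1; i; i.+1] ++ v)) None.

Definition reducible (w : word) : Prop :=
  clos_refl_sym_trans (option word) rel_step (Some w) None.

Fixpoint lexle (s t : word) : bool :=
  match s, t with
  | [::], _ => true
  | _ :: _, [::] => false
  | a :: s', b :: t' => (a < b)%N || ((a == b) && lexle s' t')
  end.

Definition nTL_monomial (n : nat) (w : word) : Prop :=
  word_on n w /\ ~ reducible w /\
  (forall w', word_equiv w w' -> lexle w w').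

(* Decomposition of a word into its decreasing runs (maximal blocks of
   consecutive letters with strictly decreasing indices), in order. *)
Fixpoint runs (w : word) : seq word :=
  match w with
  | [::] => [::]
  | x :: s =>
      match runs s with
      | (y :: r) :: rs => if (y < x)%N then (x :: y :: r) :: rs
                          else [:: x] :: (y :: r) :: rs
      | rs => [:: x] :: rs
      end
  end.

Definition peaks (w : word) : seq nat := map (head 0%N) (runs w).

(* Main.v *)
Require Import Defs.
From mathcomp Require Import all_boot.
From Stdlib Require Import Relation_Operators.

Fixpoint down (h k : nat) : seq nat :=
  match k with 0 => [::] | k'.+1 => h :: down h.-1 k' end.

Lemma runs_flatten s : flatten (runs s) = s.
Proof.
elim: s => [|x s IH] //=.
move: IH; case: (runs s) => [|[|y r] rs] /= IH; rewrite -?IH //.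
by case: ifP => _ /=.
Qed.

Lemma runs_nonempty s : all (fun r => r != [::]) (runs s).
Proof.
elim: s => [|x s IH] //=.
move: IH; case: (runs s) => [|[|y r] rs] //= IH.
by case: ifP => _ /=; rewrite IH.
Qed.

Lemma lexle_cat u a b : lexle (u ++ a) (u ++ b) = lexle a b.
Proof. by elim: u => [|x u IH] //=; rewrite ltnn eqxx IH. Qed.

Lemma down_small h k : all (fun z => z.+1 < h.+2) (down h k).
Proof.
elim: k h => [|k IH] h //=; rewrite ltnS leqnn /=.
apply: sub_all (IH h.-1) => z /=; rewrite !ltnS => H.
apply: leq_trans H _; exact: leq_pred.
Qed.

Lemma comm_left u d b v : all (fun z => z.+1 < b) d ->
  clos_refl_sym_trans _ rel_step (Some (u ++ d ++ b :: v)) (Some (u ++ b :: d ++ v)).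
Proof.
elim: d u => [|z d IH] u /=; first by intros; apply: rst_refl.
move=> /andP [Hz Hd].
have := IH (u ++ [:: z]) Hd; rewrite -!catA /= => H1.
eapply rst_trans; first exact: H1.
have := RComm u (d ++ v) (i:=z) (j:=b); rewrite Hz => /(_ isT) H.
exact: rst_step H.
Qed.

Definition NA (w : word) := forall u v x y, w = u ++ x :: y :: v -> ~~ (y.+1 < x).
Definition NB (w : word) := forall u v x, w = u ++ x :: x :: v -> False.
Definition NC (w : word) := forall u v y k, k <= y ->
  w = u ++ y.+1 :: down y k.+1 ++ y.+1 :: v -> False.

Lemma NA_cons x s : NA (x :: s) -> NA s.
Proof. by move=> H u v a b E; apply: (H (x :: u) v); rewrite E. Qed.
Lemma NB_cons x s : NB (x :: s) -> NB s.
Proof. by move=> H u v a E; apply: (H (x :: u) v a); rewrite E. Qed.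
Lemma NC_cons x s : NC (x :: s) -> NC s.
Proof. by move=> H u v a k Hk E; apply: (H (x :: u) v a k Hk); rewrite E. Qed.

Lemma main w : NA w -> NB w -> NC w ->
  sorted ltn (peaks w) /\
  forall r rs, runs w = r :: rs -> exists k, r = down (head 0 r) k.+1 /\ k <= head 0 r.
Proof.
elim: w => [|x s IH] HA HB HC; first by split => // r rs.
have [IHs IHr] := IH (@NA_cons x s HA) (@NB_cons x s HB) (@NC_cons x s HC).
have Hfl := runs_flatten s.
have Hne := runs_nonempty s.
rewrite /peaks /=.
move: IHs IHr Hfl Hne; rewrite /peaks.
case: (runs s) => [|[|y r] rs] //= IHs IHr Hfl Hne.
  by split => // r0 rs0 [<- _]; exists 0.
have [k [Ek Hk]] := IHr _ _ erefl.
rewrite /= in Ek Hk.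
case: ifP => Hyx /=.
- have Hx : x = y.+1.
    apply/eqP; rewrite eqn_leq Hyx andbT.
    have := HA [::] (r ++ flatten rs) x y; rewrite -Hfl /= => /(_ erefl).
    by rewrite -leqNgt.
  subst x.
  split; last first.
    move=> r0 rs0 [<- _]; exists k.+1; split => //=.
    by move: Ek => /= [->].
  clear IHr; move: IHs Hfl Hne; case: rs => [|[|q r2] rs] //= IHs Hfl Hne.
  move/andP: IHs => [Hyq Hp]; rewrite Hp andbT.
  rewrite ltn_neqAle Hyq andbT; apply/negP => /eqP Hq; subst q.
  apply: (HC [::] (r2 ++ flatten rs) y k Hk) => /=.
  by rewrite -Hfl; case: Ek => ->.
- split; last by move=> r0 rs0 [<- _]; exists 0.
  rewrite /= IHs andbT ltn_neqAle leqNgt Hyx andbT.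
  apply/negP => /eqP E; subst y.
  by apply: (HB [::] (r ++ flatten rs) x); rewrite -Hfl.
Qed.

Theorem lemma3 (n : nat) (w : word) :
  nTL_monomial n w ->
  forall i j, (i < j < size (peaks w))%N ->
    (nth 0 (peaks w) i < nth 0 (peaks w) j)%N.
Proof.
move=> [_ [Hred Hlex]] i j /andP [Hij Hj].
have HA : NA w.
  move=> u v x y E; apply/negP => Hxy.
  have Heq : word_equiv w (u ++ [:: y; x] ++ v).
    rewrite E; apply: rst_step.
    have := CommStep u v (i:=x) (j:=y); rewrite Hxy orbT; exact.
  have := Hlex _ Heq; rewrite E lexle_cat /=.
  by rewrite ltnNge (ltnW (ltnW Hxy)) /= gtn_eqF // (ltnW Hxy).
have HB : NB w.
  move=> u v x E; apply: Hred; rewrite E; apply: rst_step; exact: RSquare.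
have HC : NC w.
  move=> u v y k Hk E; apply: Hred; rewrite E /=.
  have Hall : all (fun z => z.+1 < y.+1) (down y.-1 k).
    case: (k) Hk => [|k'] Hk' //.
    have := down_small y.-1 k'.+1; rewrite prednK //.
    exact: leq_trans Hk'.
  eapply rst_trans.
    rewrite -[u ++ _]/(u ++ [:: y.+1; y] ++ _) catA.
    exact: (comm_left (u ++ [:: y.+1; y]) (down y.-1 k) (y.+1) v Hall).
  rewrite /=.
  apply: rst_step.
  have := RBraid2 u (down y.-1 k ++ v) y; rewrite -catA; exact.
have [Hs _] := @main w HA HB HC.
have := sorted_ltn_nth ltn_trans 0 Hs; apply => //.
by rewrite inE (ltn_trans Hij Hj).
Qed.
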